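(* Let $R$ be a $*$-ring. Then $R$ is strongly $J$-$*$-clean if and only if (1) $R$ is strongly $*$-clean, and (2) no nonzero idempotent of $R$ is the sum of two units of $R$.
   Context: All rings are associative with identity. A $*$-ring is a ring $R$ with an involution $*$, i.e. a map $a\mapsto a^*$ with $(a+b)^*=a^*+b^*$, $(ab)^*=b^*a^*$, $(a^* )^*=a$. $U(R)$ denotes the group of units and $J(R)$ the Jacobson radical of $R$. A projection is an element $e$ with $e^2=e=e^*$. $R$ is strongly $J$-$*$-clean if every $a\in R$ can be written $a=e+u$ with $e$ a projection, $u\in J(R)$ and $ae=ea$. $R$ is strongly $*$-clean if every $a\in R$ can be written $a=e+u$ with $e$ a projection, $u\in U(R)$ and $eu=ue$. *)

(* Defs.v *)
From mathcomp Require Import all_boot all_algebra.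
Set Implicit Arguments. Unset Strict Implicit. Unset Printing Implicit Defensive.
Import GRing.Theory.
Local Open Scope ring_scope.

Definition involution (R : pzRingType) (star : R -> R) : Prop :=
  [/\ forall a b, star (a + b) = star a + star b,
      forall a b, star (a * b) = star b * star a
    & forall a, star (star a) = a].

Definition is_unit (R : pzRingType) (u : R) : Prop :=
  exists v : R, u * v = 1 /\ v * u = 1.

(* Jacobson radical, via its standard elementwise description:
   a \in J(R) iff 1 - r a is invertible for every r. *)
Definition in_jacobson (R : pzRingType) (a : R) : Prop :=
  forall r : R, is_unit (1 - r * a).

Definition is_projection (R : pzRingType) (star : R -> R) (e : R) : Prop :=
  e * e = e /\ star e = e.

Definition strongly_J_star_clean (R : pzRingType) (star : R -> R) : Prop :=
  forall a : R, exists e u : R,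
    [/\ is_projection star e, in_jacobson u, a = e + u & a * e = e * a].

Definition strongly_star_clean (R : pzRingType) (star : R -> R) : Prop :=
  forall a : R, exists e u : R,
    [/\ is_projection star e, is_unit u, a = e + u & e * u = u * e].

Definition no_nonzero_idem_sum_two_units (R : pzRingType) : Prop :=
  forall e u v : R, e * e = e -> e != 0 -> is_unit u -> is_unit v -> e <> u + v.

(* Main.v *)
Require Import Defs.
From mathcomp Require Import all_boot all_algebra.
Import GRing.Theory.
Local Open Scope ring_scope.

Section S.
Variable R : pzRingType.
Implicit Types a b e h u v r : R.

Lemma unitM a b : is_unit a -> is_unit b -> is_unit (a * b).
Proof.
move=> [a' [h1 h2]] [b' [h3 h4]]; exists (b' * a'); split.
  by rewrite mulrA -(mulrA a) h3 mulr1.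
by rewrite mulrA -(mulrA b') h2 mulr1.
Qed.

Lemma unitN a : is_unit a -> is_unit (- a).
Proof. by move=> [a' [h1 h2]]; exists (- a'); rewrite !mulrNN. Qed.

Lemma idem_unit e : e * e = e -> is_unit e -> e = 1.
Proof. by move=> he [w [h1 h2]]; rewrite -[LHS]mulr1 -h1 mulrA he. Qed.

Lemma unit_cancel u a : is_unit u -> u * a = 0 -> a = 0.
Proof. by move=> [w [h1 h2]] h; rewrite -[a]mul1r -h2 -mulrA h mulr0. Qed.

Arguments unit_cancel {u a}.

Lemma jac_add a b : in_jacobson a -> in_jacobson b -> in_jacobson (a + b).
Proof.
move=> ha hb r; have [w [w1 w2]] := ha r.
have -> : 1 - r * (a + b) = (1 - r * a) * (1 - (w * r) * b).
  by rewrite mulrBr mulr1 !mulrA w1 mul1r mulrDr opprD addrA.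
apply: unitM; first exact: ha.
exact: hb.
Qed.

Lemma jac_mull s a : in_jacobson a -> in_jacobson (s * a).
Proof. by move=> ha r; rewrite mulrA; apply: ha. Qed.

Lemma star0 (star : R -> R) : involution star -> star 0 = 0.
Proof. by case=> hD _ _; apply: (@addrI _ (star 0)); rewrite addr0 -hD addr0. Qed.

Lemma starN (star : R -> R) a : involution star -> star (- a) = - star a.
Proof.
move=> hs; apply: (@addrI _ (star a)); rewrite subrr -(star0 star hs).
by case: hs => hD _ _; rewrite -hD subrr.
Qed.

Lemma star1 (star : R -> R) : involution star -> star 1 = 1.
Proof.
move=> hs; case: (hs) => _ hM hK.
have e : star (star 1 * 1) = star 1 * star (star 1) := hM _ _.
by rewrite mulr1 !hK mulr1 in e.
Qed.


Lemma idemC e : e * e = e -> (1 - e) * (1 - e) = 1 - e.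
Proof. by move=> ee; rewrite mulrBl mul1r mulrBr mulr1 ee subrr subr0. Qed.

Arguments idemC {e}.

Lemma L1 (star : R -> R) : involution star -> strongly_star_clean star ->
  forall e, e * e = e -> star e = e.
Proof.
move=> hs H e ee; have [p [u [[pp sp] hu he hpu]]] := H e.
have hep : e * p = p * e by rewrite he mulrDl mulrDr pp hpu.
have hu' : u = e - p by rewrite he addrC addKr.
have ep0 : e * p = 0.
  apply: (unit_cancel hu); rewrite hu' mulrBl !mulrA ee -hep -mulrA pp subrr.
  done.
have e1 : e + p - 1 = 0.
  apply: (unit_cancel hu); rewrite hu' mulrBl !mulrBr !mulrDr !mulr1 ee pp ep0.
  by rewrite -hep ep0 addr0 subrr addrK subrr.
have -> : e = 1 - p by apply/eqP; rewrite -subr_eq0 opprB addrA e1.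
case: (hs) => hD _ _; by rewrite hD starN // sp (star1 star hs).
Qed.

Lemma L2half (star : R -> R) : involution star ->
  (forall e, e * e = e -> star e = e) ->
  forall e r, e * e = e -> e * r * (1 - e) = 0.
Proof.
move=> hs Hp e r ee; set x := e * r * (1 - e).
have xe : x * e = 0 by rewrite /x -mulrA mulrBl mul1r ee subrr mulr0.
have ex : e * x = x by rewrite /x !mulrA ee.
have xx : x * x = 0 by rewrite {2}/x !mulrA xe !mul0r.
have fi : (e + x) * (e + x) = e + x.
  by rewrite mulrDl !mulrDr ee ex xe xx addr0 addr0.
have sx : star x = x.
  have := Hp _ fi; case: (hs) => hD hM _; rewrite hD (Hp _ ee).
  by move/addrI.
have := erefl (star (x * e)); case: (hs) => _ hM _.
rewrite {1}xe (star0 star hs) hM sx (Hp _ ee) ex => <-. done.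
Qed.

Lemma L2 (star : R -> R) : involution star ->
  (forall e, e * e = e -> star e = e) ->
  forall e r, e * e = e -> e * r = r * e.
Proof.
move=> hs Hp e r ee.
have h1 := L2half star hs Hp e r ee.
have h2 := L2half star hs Hp (1 - e) r (idemC ee).
rewrite subKr in h2.
move: h1; rewrite mulrBr mulr1 => /eqP; rewrite subr_eq0 => /eqP ->.
by move: h2; rewrite !mulrBl mul1r => /eqP; rewrite subr_eq0 => /eqP ->.
Qed.

Section Ab.
Hypothesis Hc : forall e r : R, e * e = e -> e * r = r * e.

Lemma AB a b : a * b = 1 -> b * a = 1.
Proof.
move=> ab; have ff : (b * a) * (b * a) = b * a by rewrite mulrA -(mulrA b) ab mulr1.
have aa : a = b * a * a by rewrite (Hc _ a ff) mulrA ab mul1r.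
by rewrite -[b * a]mulr1 -ab mulrA -aa.
Qed.

Lemma corner h a b : h * h = h ->
  (h * a + (1 - h)) * (h * b + (1 - h)) = h * (a * b) + (1 - h).
Proof.
move=> hh; have h0 : h * (1 - h) = 0 by rewrite mulrBr mulr1 hh subrr.
have h0' : (1 - h) * h = 0 by rewrite mulrBl mul1r hh subrr.
have t1 : h * a * (h * b) = h * (a * b).
  by rewrite -mulrA (mulrA a) -(Hc h a hh) !mulrA hh.
have t2 : h * a * (1 - h) = 0.
  by rewrite -mulrA -(Hc _ a (idemC hh)) mulrA h0 mul0r.
have t3 : (1 - h) * (h * b) = 0 by rewrite mulrA h0' mul0r.
have t4 := idemC hh.
by rewrite mulrDl (mulrDr (h * a)) (mulrDr (1 - h) (h * b)) t1 t2 t3 t4 addr0 add0r.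
Qed.

End Ab.


Lemma idem0 e : e * e = e -> e * (1 - e) = 0 /\ (1 - e) * e = 0.
Proof. by move=> ee; rewrite mulrBr mulrBl mulr1 mul1r ee subrr. Qed.

Lemma key (star : R -> R) (Hc : forall e r : R, e * e = e -> e * r = r * e) :
  strongly_star_clean star -> no_nonzero_idem_sum_two_units R ->
  forall u, is_unit u -> in_jacobson (u + 1).
Proof.
move=> H N u hu r; set W := u + 1.
have [h [v [[hh _] hv hz _]]] := H (1 - r * W).
suff h0 : h = 0 by rewrite hz h0 add0r.
apply/eqP; apply: contraT => hn0.
have hrW : h * (r * W) = - (h * v).
  have : h * (1 - r * W) = h * (h + v) by rewrite -hz.
  rewrite (mulrBr h) mulr1 (mulrDr h h v) hh => /addrI e.
  by rewrite -e opprK.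
have [v' [vv1 vv2]] := hv.
have P1 : (h * r + (1 - h)) * (h * W + (1 - h)) = h * (- v) + (1 - h).
  by rewrite (corner Hc) // hrW mulrN.
have QP : (h * (- v') + (1 - h)) * ((h * r + (1 - h)) * (h * W + (1 - h))) = 1.
  by rewrite P1 (corner Hc) // mulrNN vv2 mulr1 addrC subrK.
have Yu : is_unit (h * W + (1 - h)).
  exists ((h * (- v') + (1 - h)) * (h * r + (1 - h))).
  have LY : (h * (- v') + (1 - h)) * (h * r + (1 - h)) * (h * W + (1 - h)) = 1.
    by rewrite -mulrA.
  split; [exact: (AB Hc _ _ LY) | exact: LY].
have Xu : is_unit (h * u + (1 - h)).
  have [u' [uu1 uu2]] := hu; exists (h * u' + (1 - h)).
  by rewrite !(corner Hc) // uu1 uu2 mulr1 addrC subrK.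
case: (N h (- (h * u + (1 - h))) (h * W + (1 - h)) hh hn0 (unitN _ Xu) Yu).
by rewrite /W mulrDr mulr1 opprD addrACA addKr addNr addr0.
Qed.


Lemma main (star : R -> R) :
  involution star ->
  (strongly_J_star_clean star <->
   strongly_star_clean star /\ no_nonzero_idem_sum_two_units R).
Proof.
move=> hs; split.
- move=> HJ; split.
  + move=> a; have [e [j [[ee se] hj ha hae]]] := HJ a.
    have [e0 e0'] := idem0 _ ee.
    have ej : e * j = j * e.
      by move: hae; rewrite ha mulrDl mulrDr => /addrI.
    have ac : a * (1 - e) = (1 - e) * a by rewrite mulrBr mulrBl mulr1 mul1r hae.
    exists (1 - e), (a - (1 - e)); split.
    * split; first exact: idemC ee.
      by case: (hs) => hD _ _; rewrite hD starN // se (star1 star hs).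
    * set s := e - (1 - e).
      have ss : s * s = 1.
        by rewrite /s mulrBl (mulrBr e) (mulrBr (1 - e)) ee e0 e0' idemC // subr0 sub0r opprK addrC subrK.
      have -> : a - (1 - e) = s * (1 - (- s) * j).
        by rewrite mulrBr mulr1 mulNr mulrN opprK mulrA ss mul1r ha /s addrAC.
      apply: unitM; first by exists s.
      exact: hj.
    * by rewrite addrC subrK.
    * by rewrite mulrBr mulrBl ac.
  + move=> f u v ff fn0 hu hv fuv.
    have U1 : forall w : R, is_unit w -> exists j, in_jacobson j /\ w = 1 + j.
      move=> w hw; have [e [j [[ee _] hj hwe _]]] := HJ w.
      exists j; split => //.
      have [w' [ww1 ww2]] := hw.
      have eu : e = w * (1 - w' * j).
        by rewrite mulrBr mulr1 mulrA ww1 mul1r hwe addrK.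
      have e1 : e = 1.
        apply: idem_unit => //; rewrite eu; apply: unitM => //; exact: hj.
      by rewrite hwe e1.
    have two : in_jacobson (1 + 1 : R).
      have [j [hj ej]] := U1 (-1) (unitN _ (ex_intro _ 1 (conj (mulr1 1) (mulr1 1)))).
      have -> : (1 + 1 : R) = (-1) * j.
        by rewrite mulN1r -[j](addKr 1) -ej opprD opprK.
      exact: jac_mull.
    have [j [hj ej]] := U1 _ hu.
    have [k [hk ek]] := U1 _ hv.
    have fJ : in_jacobson f.
      rewrite fuv ej ek addrACA; exact: (jac_add _ _ two (jac_add _ _ hj hk)).
    have [w [w1 w2]] := fJ 1.
    have : (1 - 1 * f) * f = 0 by rewrite mul1r mulrBl mul1r ff subrr.
    move/(unit_cancel (fJ 1)) => f0.
    by move: fn0; rewrite f0 eqxx.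
- move=> [sc N] a.
  have Hc := L2 star hs (L1 star hs sc).
  have [e [u [[ee se] hu ha heu]]] := sc (a - 1).
  have ha' : a = e + (u + 1) by rewrite addrA -ha subrK.
  exists e, (u + 1); split => //.
  + exact: (key star Hc sc N _ hu).
  + by rewrite ha' mulrDl mulrDr !mulrDl !mulrDr heu mul1r mulr1.
Qed.

End S.

Theorem corollary2p7 (R : pzRingType) (star : R -> R) :
  involution star ->
  (strongly_J_star_clean star <->
   strongly_star_clean star /\ no_nonzero_idem_sum_two_units R).
Proof. exact: main. Qed.
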